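(* Let $u,v$ be generalized Stirling permutations and $F_u^*,F_v^*$ the corresponding dual basis elements of the graded dual $\mathrm{STSym}^*$ (whose product is the transpose of the coproduct of $\mathrm{STSym}$). Then $$F_u^*\cdot F_v^*=\sum_{w:\ u\backslash v\ \le_{Pw}\ w\ \le_{Pw}\ u/v}F_w^*.$$
   Context: A generalized Stirling permutation (GSP) of degree $n$ is a planar tree (children of each node linearly ordered, each node a leaf or with $\ge2$ children) with $n+1$ leaves, together with a bijection $\kappa$ from its internal nodes to $\{1,\dots,N\}$ ($N$ = number of internal nodes) increasing from each internal node to its internal children. Its word $\mathbf w(u)=u_1\cdots u_n$: a leaf has empty word; a node $x$ with children $c_1,\dots,c_k$ has word $\mathbf w(c_1)\kappa(x)\mathbf w(c_2)\cdots\kappa(x)\mathbf w(c_k)$; $u\mapsto \mathbf w(u)$ is injective and we identify $u$ with its word, a packed word (set of letters $\{1,\dots,N\}$). For a word $a$, $\mathrm{pack}(a)$ is the packed word with the same relative order of letters. $\mathrm{STSym}$ has basis $\{F_u\}$ over GSPs, with coproduct $\Delta(F_w)=\sum F_{\mathrm{pack}(w_1\cdots w_i)}\otimes F_{\mathrm{pack}(w_{i+1}\cdots w_n)}$ over all $0\le i\le n$ with $\{w_1,\dots,w_i\}\cap\{w_{i+1},\dots,w_n\}=\emptyset$ (equivalently, over allowable lightning splittings of the tree, with standardized labels). $u/v$ is the GSP whose word is $u$ with all letters increased by $\max v$, followed by $v$ (tree: root of $u$ identified with the leftmost leaf of $v$); $u\backslash v$ is the GSP with word $u$ followed by $v$ with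 all letters increased by $\max u$ (tree: root of $v$ identified with the rightmost leaf of $u$). Planar weak order: for packed words, $w^{-1}(a)=\{p:w_p=a\}$, $\mathrm{iInv}(w)=\{(a,b):a<b,\ \min w^{-1}(a)>\max w^{-1}(b)\}$, $T_a(w)$ = $w$ with letters $a,a+1$ swapped; $\le_{Pw}$ is the reflexive–transitive closure of: $u$ is covered by $w$ iff $u=T_a(w)$ and $|\mathrm{iInv}(w)|=|\mathrm{iInv}(u)|+1$; on GSPs it is induced via words. *)

(* Defs.v *)
From Stdlib Require Import Relations.
From mathcomp Require Import all_boot.
Set Implicit Arguments. Unset Strict Implicit. Unset Printing Implicit Defensive.

(** Words are sequences of natural numbers; letters of packed words are 1..N. *)

Inductive ptree := Leaf | Node of nat & seq ptree.

Fixpoint tree_wf (t : ptree) : bool :=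
  match t with
  | Leaf => true
  | Node x cs =>
      [&& 1 < size cs,
          all (fun c => match c with Leaf => true | Node y _ => x < y end) cs
        & all tree_wf cs]
  end.

Fixpoint tree_labels (t : ptree) : seq nat :=
  match t with
  | Leaf => [::]
  | Node x cs => x :: flatten (map tree_labels cs)
  end.

Definition tree_labelling_ok (t : ptree) : bool :=
  perm_eq (tree_labels t) (iota 1 (size (tree_labels t))).

Fixpoint tree_word (t : ptree) : seq nat :=
  match t with
  | Leaf => [::]
  | Node x cs =>
      match cs with
      | [::] => [::]
      | c :: cs' => tree_word c ++ flatten (map (fun c' => x :: tree_word c') cs')
      end
  end.

(** A generalized Stirling permutation, identified with its word. *)
Definition isGSP (w : seq nat) : Prop :=
  exists t : ptree, [&& tree_wf t, tree_labelling_ok t & tree_word t == w].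

(** Largest letter (0 for the empty word). *)
Definition maxw (w : seq nat) : nat := foldr maxn 0 w.

Definition pack (a : seq nat) : seq nat :=
  map (fun x => count (fun y => y <= x) (undup a)) a.

Definition gsp_over (u v : seq nat) : seq nat := map (fun x => x + maxw v) u ++ v.
Definition gsp_under (u v : seq nat) : seq nat := u ++ map (fun x => x + maxw u) v.

Definition packed (w : seq nat) : bool :=
  all (fun x => 0 < x) w && all (fun k => k \in w) (iota 1 (maxw w)).

(** 0-based positions of the first and last occurrences of a letter. *)
Definition first_pos (a : nat) (w : seq nat) : nat := index a w.
Definition last_pos (a : nat) (w : seq nat) : nat := size w - (index a (rev w)).+1.

Definition iInv_card (w : seq nat) : nat :=
  \sum_(1 <= a < (maxw w).+1) \sum_(a.+1 <= b < (maxw w).+1)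
     (last_pos b w < first_pos a w).

Definition swap_letters (a : nat) (w : seq nat) : seq nat :=
  map (fun x => if x == a then a.+1 else if x == a.+1 then a else x) w.

Definition pw_cover (u w : seq nat) : Prop :=
  [/\ packed u, packed w &
      exists a : nat, u = swap_letters a w /\ iInv_card w = (iInv_card u).+1].

Definition pw_le : seq nat -> seq nat -> Prop := clos_refl_trans (seq nat) pw_cover.

Definition split_ok (w : seq nat) (i : nat) : bool :=
  ~~ has (fun x => x \in drop i w) (take i w).

(** Elements of the graded dual STSym^* as coefficient functions on the basis
    (GSP words); the dual basis element F_u^*. *)
Definition Fdual (u : seq nat) : seq nat -> nat := fun w => (w == u : nat).

(** Product of STSym^*: transpose of the coproduct
    Delta(F_w) = sum_{allowed i} F_{pack(w_1..w_i)} (x) F_{pack(w_{i+1}..w_n)}.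
    The coefficient of F_w^* in f.g is sum over allowed splittings of w. *)
Definition dual_prod (f g : seq nat -> nat) (w : seq nat) : nat :=
  \sum_(i < (size w).+1)
     (if split_ok w i then f (pack (take i w)) * g (pack (drop i w)) else 0).

(* Main.v *)
Require Import Defs.
From Stdlib Require Import Relations.
From mathcomp Require Import all_boot zify.
Set Implicit Arguments. Unset Strict Implicit. Unset Printing Implicit Defensive.

Lemma maxw_cons x s : maxw (x :: s) = maxn x (maxw s).
Proof. by []. Qed.

Lemma maxw_ub s z : z \in s -> z <= maxw s.
Proof.
elim: s => //= x s IH; rewrite in_cons => /orP [/eqP ->|/IH]; lia.
Qed.

Lemma maxw_mem s : s != [::] -> maxw s \in s.
Proof.
elim: s => // x s IH _; rewrite maxw_cons in_cons.
case: s IH => [|y s] IH; first by rewrite maxn0 eqxx.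
have /IH H : y :: s != [::] by [].
move: H; set m := maxw (y :: s) => H.
rewrite /maxn; case: ltnP => _; first by rewrite H orbT.
by rewrite eqxx.
Qed.

Lemma maxw_sub s t : {subset s <= t} -> maxw s <= maxw t.
Proof.
case: s => [|x s] H; first by [].
by apply: maxw_ub; apply: H; apply: maxw_mem.
Qed.

Lemma maxw_eq_mem s t : s =i t -> maxw s = maxw t.
Proof.
move=> H; apply/eqP; rewrite eqn_leq !maxw_sub // => z; by rewrite H.
Qed.

Lemma packed_iff s : packed s <-> forall z, (z \in s) = (0 < z <= maxw s).
Proof.
split.
- case/andP => /allP H1 /allP H2 z; apply/idP/idP.
  + by move=> zs; rewrite H1 // maxw_ub.
  + by move=> hz; apply: H2; rewrite mem_iota; lia.
- move=> H; apply/andP; split; apply/allP => z.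
  + by rewrite H => /andP [].
  + by rewrite mem_iota H; lia.
Qed.

Lemma packed_range s m : (forall z, (z \in s) = (0 < z <= m)) -> packed s.
Proof.
move=> H.
have Hm : maxw s = m.
  case: (posnP m) => [m0|mpos].
    subst m; case: s H => [|x s] H //.
    by have := H x; rewrite in_cons eqxx /=; lia.
  have ms : m \in s by rewrite H; lia.
  have ne : s != [::] by case: s ms H.
  have := maxw_ub ms; have := maxw_mem ne; rewrite H; lia.
by apply/packed_iff => z; rewrite Hm H.
Qed.

Lemma packed_mem s t : packed s -> s =i t -> packed t.
Proof.
move=> /packed_iff H E; apply: (@packed_range _ (maxw s)) => z.
by rewrite -E H.
Qed.

Definition sig (a z : nat) := if z == a then a.+1 else if z == a.+1 then a else z.

Lemma swapE a s : swap_letters a s = map (sig a) s.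
Proof. by []. Qed.

Lemma sigK a : involutive (sig a).
Proof. by move=> z; rewrite /sig; repeat case: eqP; lia. Qed.

Lemma sig_inj a : injective (sig a).
Proof. exact: can_inj (sigK a). Qed.

Lemma mem_swap a s z : (z \in swap_letters a s) = (sig a z \in s).
Proof. by rewrite swapE -{1}(sigK a z) mem_map //; apply: sig_inj. Qed.

Lemma swapK a : involutive (swap_letters a).
Proof. by move=> s; rewrite !swapE -map_comp (eq_map (sigK a)) map_id. Qed.

Lemma sig_range a m z : 0 < a -> a < m -> (0 < sig a z <= m) = (0 < z <= m).
Proof. by move=> h1 h2; rewrite /sig; repeat case: eqP; lia. Qed.

Lemma swap_mem_packed a s : packed s -> 0 < a -> a < maxw s ->
  swap_letters a s =i s.
Proof.
move=> /packed_iff H h1 h2 z; rewrite mem_swap !H sig_range //.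
Qed.

Lemma sig_lt a c d : (sig a c < sig a d) + ((c == a) && (d == a.+1))
  = (c < d) + ((c == a.+1) && (d == a)).
Proof. by rewrite /sig; repeat case: eqP; lia. Qed.

Definition gg (x : seq nat) (c d : nat) : nat := last_pos d x < first_pos c x.

Lemma iInv_full x : iInv_card x =
  \sum_(1 <= c < (maxw x).+1) \sum_(1 <= d < (maxw x).+1) (c < d) * gg x c d.
Proof.
rewrite /iInv_card; set m := maxw x.
apply: eq_big_nat => c /andP [c1 cm].
rewrite [RHS](@big_cat_nat _ _ _ c.+1) //=; try lia.
have -> : \sum_(1 <= i < c.+1) (c < i) * gg x c i = 0.
  rewrite big_nat_cond big1 // => d /andP [/andP [_ h] _].
  by rewrite ltnNge -ltnS h.
rewrite add0n; apply: eq_big_nat => d /andP [h _]; by rewrite h mul1n.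
Qed.

Lemma first_swap a x c : first_pos c (swap_letters a x) = first_pos (sig a c) x.
Proof.
by rewrite /first_pos swapE -{1}(sigK a c) index_map //; apply: sig_inj.
Qed.

Lemma last_swap a x c : last_pos c (swap_letters a x) = last_pos (sig a c) x.
Proof.
rewrite /last_pos swapE size_map -map_rev -{1}(sigK a c) index_map //.
exact: sig_inj.
Qed.

Lemma gg_swap a x c d : gg (swap_letters a x) c d = gg x (sig a c) (sig a d).
Proof. by rewrite /gg first_swap last_swap. Qed.

Lemma reindex_sig a m (F : nat -> nat) : 0 < a -> a < m ->
  \sum_(1 <= c < m.+1) F (sig a c) = \sum_(1 <= c < m.+1) F c.
Proof.
move=> h1 h2; rewrite -(big_map (sig a) xpredT F).
apply: perm_big; apply: uniq_perm.
- by rewrite map_inj_uniq ?iota_uniq //; apply: sig_inj.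
- exact: iota_uniq.
move=> c; rewrite -{1}(sigK a c) mem_map; last exact: sig_inj.
rewrite !mem_index_iota; move: (sig_range c h1 h2); lia.
Qed.

Lemma sum_pick (r : seq nat) b (F : nat -> nat) : b \in r -> uniq r ->
  \sum_(d <- r) (d == b) * F d = F b.
Proof.
move=> br ur; rewrite (bigD1_seq b) //= eqxx mul1n big1 ?addn0 //.
by move=> d /negbTE ->.
Qed.

Lemma iInv_swap x a : packed x -> 0 < a -> a < maxw x ->
  iInv_card (swap_letters a x) + gg x a a.+1 = iInv_card x + gg x a.+1 a.
Proof.
move=> px h1 h2.
have Em : maxw (swap_letters a x) = maxw x.
  by apply: maxw_eq_mem; apply: swap_mem_packed.
rewrite !iInv_full Em; set m := maxw x.
have E1 : \sum_(1 <= c < m.+1) \sum_(1 <= d < m.+1) (c < d) * gg (swap_letters a x) c d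
  = \sum_(1 <= c < m.+1) \sum_(1 <= d < m.+1) (sig a c < sig a d) * gg x c d.
  transitivity (\sum_(1 <= c < m.+1) \sum_(1 <= d < m.+1)
     (fun c' d' => (sig a c' < sig a d') * gg x c' d') (sig a c) (sig a d)).
    by apply: eq_bigr => c _; apply: eq_bigr => d _; rewrite /= !sigK gg_swap.
  rewrite -(@reindex_sig a m (fun c => \sum_(1 <= d < m.+1) (sig a c < sig a d) * gg x c d)) //.
  by apply: eq_bigr => c _; rewrite (@reindex_sig a m (fun d => (sig a (sig a c) < sig a d) * gg x (sig a c) d)).
have uI : uniq (index_iota 1 m.+1) by exact: iota_uniq.
have aI : a \in index_iota 1 m.+1 by rewrite mem_index_iota; lia.
have a1I : a.+1 \in index_iota 1 m.+1 by rewrite mem_index_iota; lia.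
have P1 b1 b2 : b1 \in index_iota 1 m.+1 -> b2 \in index_iota 1 m.+1 ->
   \sum_(1 <= c < m.+1) \sum_(1 <= d < m.+1) ((c == b1) && (d == b2)) * gg x c d
   = gg x b1 b2.
  move=> i1 i2.
  transitivity (\sum_(1 <= c < m.+1) (c == b1) * \sum_(1 <= d < m.+1) (d == b2) * gg x c d).
    apply: eq_bigr => c _; rewrite big_distrr; apply: eq_bigr => d _ /=.
    by case: (c == b1); case: (d == b2); rewrite ?mul0n ?mul1n.
  rewrite (sum_pick (fun c => \sum_(1 <= d < m.+1) (d == b2) * gg x c d)) //.
  by rewrite (sum_pick (fun d => gg x b1 d)).
rewrite E1 -(P1 a a.+1) // -(P1 a.+1 a) // -!big_split /=.
apply: eq_bigr => c _; rewrite -!big_split; apply: eq_bigr => d _ /=.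
by rewrite -!mulnDl sig_lt.
Qed.

Definition rel_ok (x y : seq nat) := size x = size y /\
  forall i j, i < j -> j < size x ->
    (nth 0 x i == nth 0 x j) = (nth 0 y i == nth 0 y j) /\
    (nth 0 x j < nth 0 x i -> nth 0 y j < nth 0 y i).

Lemma rel_refl x : rel_ok x x.
Proof. by split. Qed.

Lemma rel_trans x y z : rel_ok x y -> rel_ok y z -> rel_ok x z.
Proof.
move=> [s1 H1] [s2 H2]; split; first by rewrite s1.
move=> i j ij jx; have [e1 o1] := H1 i j ij jx.
have jy : j < size y by rewrite -s1.
have [e2 o2] := H2 i j ij jy.
by rewrite e1 e2; split => // /o1 /o2.
Qed.

Lemma first_le s c i : i < size s -> nth 0 s i = c -> first_pos c s <= i.
Proof.
move=> hi hc; rewrite leqNgt; apply/negP => /(before_find 0).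
by rewrite hc /= eqxx.
Qed.

Lemma last_ge s c j : j < size s -> nth 0 s j = c -> j <= last_pos c s.
Proof.
move=> hj hc; rewrite /last_pos.
have hn : size s - j.+1 < size (rev s) by rewrite size_rev; lia.
have : nth 0 (rev s) (size s - j.+1) = c.
  rewrite nth_rev; last by rewrite size_rev in hn.
  by rewrite -hc; congr nth; lia.
move/(first_le hn); rewrite /first_pos; lia.
Qed.

Lemma packed_pos s z : packed s -> z \in s -> 0 < z.
Proof. by move=> /packed_iff H; rewrite H => /andP []. Qed.

Lemma cover_rel y x : pw_cover y x -> rel_ok y x.
Proof.
case=> py px [a [ey ei]].
have ex : x = swap_letters a y by rewrite ey swapK.
have NB : forall i j, i < j -> j < size y -> nth 0 y i = a.+1 -> nth 0 y j = a -> False.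
  move=> i j ij jy hi hj.
  have iy : i < size y by lia.
  have ay : a \in y by rewrite -hj mem_nth.
  have a1y : a.+1 \in y by rewrite -hi mem_nth.
  have a0 : 0 < a by apply: (packed_pos py ay).
  have am : a < maxw y by apply: maxw_ub a1y.
  have := iInv_swap py a0 am; rewrite -ex ei.
  have -> : gg y a.+1 a = 0.
    rewrite /gg; have := first_le iy hi; have := last_ge jy hj.
    case: ltnP => //; lia.
  lia.
have sz : size y = size x by rewrite ex swapE size_map.
split => // i j ij jy.
have iy : i < size y by lia.
rewrite ex swapE !(nth_map 0) //; split.
  by rewrite (inj_eq (@sig_inj a)).
move=> lt.
have := sig_lt a (nth 0 y j) (nth 0 y i).
have NB' : ((nth 0 y j == a) && (nth 0 y i == a.+1)) = false.
  apply/negbTE/negP => /andP [/eqP h1 /eqP h2]; exact: (NB i j).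
rewrite NB' lt; case: (sig a _ < sig a _) => //=; lia.
Qed.

Lemma pw_le_rel x y : pw_le x y -> rel_ok x y.
Proof.
elim=> [? ? /cover_rel //| ? | ? ? ? _ H1 _ H2]; first exact: rel_refl.
exact: rel_trans H1 H2.
Qed.

Lemma drop_nth (s : seq nat) k : drop k s = map (nth 0 s) (iota k (size s - k)).
Proof. by rewrite map_nth_iota // take_oversize // size_drop. Qed.

Lemma mem_drop_nth (s : seq nat) k x :
  (x \in drop k s) = has (fun l => nth 0 s l == x) (iota k (size s - k)).
Proof. by rewrite drop_nth -has_pred1 has_map. Qed.

Lemma count_undup_nth (P : pred nat) (s : seq nat) :
  count P (undup s) =
  \sum_(j < size s) (P (nth 0 s j) && (nth 0 s j \notin drop j.+1 s)).
Proof.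
elim: s => [|x s IH]; first by rewrite big_ord0.
rewrite big_ord_recl /= -IH drop0.
by case: (x \in s) => /=; rewrite ?add0n //; case: (P x).
Qed.

Definition iso (s t : seq nat) := size s = size t /\
  forall i j, i < size s -> j < size s -> (nth 0 s i <= nth 0 s j) = (nth 0 t i <= nth 0 t j).

Lemma iso_eq s t i j : iso s t -> i < size s -> j < size s ->
  (nth 0 s i == nth 0 s j) = (nth 0 t i == nth 0 t j).
Proof. by move=> [_ H] hi hj; rewrite !eqn_leq !H. Qed.

Lemma pack_iso s t : iso s t -> pack s = pack t.
Proof.
move=> I; have [sz H] := I.
apply: (@eq_from_nth _ 0); first by rewrite !size_map sz.
move=> i; rewrite size_map => hi.
rewrite /pack !(nth_map 0) -?sz // !count_undup_nth -sz.
apply: eq_bigr => j _; have hj := ltn_ord j.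
rewrite H //; congr andb; congr negb.
rewrite !mem_drop_nth -sz; apply: eq_in_has => l; rewrite mem_iota => /andP [_ hl].
by apply: iso_eq => //; lia.
Qed.

Lemma count_le_iota c m : 0 < c <= m -> count (fun y => y <= c) (iota 1 m) = c.
Proof.
move=> h; have -> : m = c + (m - c) by lia.
rewrite iotaD count_cat.
rewrite (@eq_in_count _ _ predT); last by move=> y; rewrite mem_iota add1n ltnS => /andP [_ ->].
rewrite count_predT size_iota.
rewrite (@eq_in_count _ _ pred0) ?count_pred0 ?addn0 //.
by move=> y; rewrite mem_iota add1n => /andP [h1 _] /=; rewrite leqNgt h1.
Qed.

Lemma count_undup_packed s c : packed s -> c \in s ->
  count (fun y => y <= c) (undup s) = c.
Proof.
move=> /packed_iff H cs.
have P : perm_eq (undup s) (iota 1 (maxw s)).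
  apply: uniq_perm; rewrite ?undup_uniq ?iota_uniq // => z.
  by rewrite mem_undup H mem_iota; lia.
rewrite (permP P) count_le_iota //; by rewrite -H.
Qed.

Lemma pack_packed s : packed s -> pack s = s.
Proof.
move=> ps; rewrite /pack; transitivity (map id s); last exact: map_id.
apply/eq_in_map => c cs.
exact: count_undup_packed.
Qed.

Lemma rel_take k x y : rel_ok x y -> rel_ok (take k x) (take k y).
Proof.
move=> [sz H]; split; first by rewrite !size_take sz.
move=> i j ij; rewrite size_take_min leq_min => /andP [jk jx].
have ik : i < k by apply: ltn_trans ij jk.
rewrite (nth_take 0 ik x) (nth_take 0 jk x) (nth_take 0 ik y) (nth_take 0 jk y).
exact: H.
Qed.

Lemma rel_drop k x y : rel_ok x y -> rel_ok (drop k x) (drop k y).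
Proof.
move=> [sz H]; split; first by rewrite !size_drop sz.
move=> i j ij; rewrite size_drop => hj.
rewrite !nth_drop; apply: H; first by rewrite ltn_add2l.
by rewrite -ltn_subRL.
Qed.

Lemma sandwich a b c : rel_ok a b -> rel_ok b c -> iso a c -> iso b a.
Proof.
move=> [s1 H1] [s2 H2] [s3 H3].
have key : forall i j, i < j -> j < size a ->
   (nth 0 b i <= nth 0 b j) = (nth 0 a i <= nth 0 a j) /\
   (nth 0 b j <= nth 0 b i) = (nth 0 a j <= nth 0 a i).
  move=> i j ij ja.
  have [ea oa] := H1 i j ij ja.
  have jb : j < size b by rewrite -s1.
  have [eb ob] := H2 i j ij jb.
  have ia : i < size a by apply: ltn_trans ij ja.
  have e3 := H3 i j ia ja.
  have lt : (nth 0 b j < nth 0 b i) = (nth 0 a j < nth 0 a i).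
    apply/idP/idP => [/ob|/oa //].
    by move=> h; rewrite ltnNge e3 -ltnNge.
  have eq2 : (nth 0 b j == nth 0 b i) = (nth 0 a j == nth 0 a i).
    by rewrite eq_sym -ea eq_sym.
  split; first by rewrite leqNgt [RHS]leqNgt lt.
  by rewrite leq_eqVlt [RHS]leq_eqVlt lt eq2.
split; first by [].
move=> i j; rewrite -s1 => hi hj.
case: (ltngtP i j) => [ij|ji|->] //.
- by case: (key i j ij hj).
- by case: (key j i ji hi).
- by rewrite !leqnn.
Qed.

Lemma size_pack s : size (pack s) = size s.
Proof. by rewrite /pack size_map. Qed.

Lemma dual_prodE u v w : dual_prod (Fdual u) (Fdual v) w =
  [&& size u <= size w, split_ok w (size u),
      pack (take (size u) w) == u & pack (drop (size u) w) == v].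
Proof.
rewrite /dual_prod /Fdual.
have Hother : forall i : 'I_(size w).+1, (i : nat) != size u ->
   (if split_ok w i then (pack (take i w) == u) * (pack (drop i w) == v) else 0) = 0.
  move=> i hi; case: (split_ok w i) => //.
  have -> : (pack (take i w) == u) = false.
    apply/negbTE/negP => /eqP h; move: hi; rewrite -h size_pack size_takel ?eqxx //.
    by rewrite -ltnS ltn_ord.
  by rewrite mul0n.
case: (leqP (size u) (size w)) => hk.
- have hk' : size u < (size w).+1 by rewrite ltnS.
  rewrite (bigD1 (Ordinal hk')) //= big1; last first.
    by move=> i hi; apply: Hother; apply: contra hi => /eqP h; apply/eqP/val_inj.
  rewrite addn0; case: (split_ok _ _) => //=.
  by case: (pack _ == u); case: (pack _ == v).
- rewrite big1 // => i _; apply: Hother.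
  by rewrite neq_ltn; apply/orP; left; apply: leq_trans (ltn_ord i) hk.
Qed.

Lemma iso_shift s d : iso s (map (fun x => x + d) s).
Proof.
split; first by rewrite size_map.
by move=> i j hi hj; rewrite !(nth_map 0) // leq_add2r.
Qed.

Lemma iso_sym s t : iso s t -> iso t s.
Proof. by move=> [sz H]; split => // i j; rewrite -sz => hi hj; rewrite H. Qed.

Lemma interval_shuffle u v w : packed u -> packed v ->
  pw_le (gsp_under u v) w -> pw_le w (gsp_over u v) ->
  [&& size u <= size w, split_ok w (size u),
      pack (take (size u) w) == u & pack (drop (size u) w) == v].
Proof.
move=> pu pv /pw_le_rel R1 /pw_le_rel R2.
set k := size u.
have sw : size w = k + size v.
  by case: R1 => <- _; rewrite /gsp_under size_cat size_map.
have tu : take k (gsp_under u v) = u by rewrite /gsp_under take_size_cat.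
have du : drop k (gsp_under u v) = map (fun x => x + maxw u) v.
  by rewrite /gsp_under drop_size_cat.
have to : take k (gsp_over u v) = map (fun x => x + maxw v) u.
  by rewrite /gsp_over take_size_cat // size_map.
have dov : drop k (gsp_over u v) = v.
  by rewrite /gsp_over drop_size_cat // size_map.
have I1 : iso (take k w) u.
  have := sandwich (rel_take k R1) (rel_take k R2).
  rewrite tu to => H; apply: iso_sym; apply: iso_sym; apply: H; exact: iso_shift.
have I2 : iso (drop k w) (map (fun x => x + maxw u) v).
  have := sandwich (rel_drop k R1) (rel_drop k R2).
  rewrite du dov => H; apply: H; apply: iso_sym; exact: iso_shift.
apply/and4P; split.
- by rewrite sw leq_addr.
- apply/hasPn => x /(nthP 0) [i hi <-]; apply/negP => /(nthP 0) [j hj e].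
  rewrite size_take_min leq_min in hi; case/andP: hi => ik _.
  rewrite size_drop sw addKn in hj.
  have jv : j < size v by [].
  rewrite nth_drop nth_take // in e.
  case: R1 => s1 H1.
  have l1 : i < k + j by apply: leq_trans ik (leq_addr _ _).
  have l2 : k + j < size (gsp_under u v) by rewrite s1 sw ltn_add2l.
  have [E _] := H1 i (k + j) l1 l2.
  move: E; rewrite e eqxx /gsp_under !nth_cat ik.
  have -> : (k + j < size u) = false by rewrite ltnNge leq_addr.
  rewrite addKn (nth_map 0) // => /eqP E.
  have h1 : nth 0 u i <= maxw u by apply: maxw_ub; apply: mem_nth.
  have h2 : 0 < nth 0 v j by apply: (packed_pos pv); apply: mem_nth.
  lia.
- by rewrite (pack_iso I1) pack_packed.
- by rewrite (pack_iso I2) -(pack_iso (iso_shift v (maxw u))) pack_packed.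
Qed.

Definition disj (s1 s2 : seq nat) := ~~ has (fun x => x \in s2) s1.

Lemma disjP (s1 s2 : seq nat) x : disj s1 s2 -> x \in s1 -> x \notin s2.
Proof. by move=> /hasPn H /H. Qed.

Lemma first_in c (s1 s2 : seq nat) : c \in s1 -> first_pos c (s1 ++ s2) < size s1.
Proof. by move=> h; rewrite /first_pos index_cat h index_mem. Qed.

Lemma first_out c (s1 s2 : seq nat) : c \notin s1 -> size s1 <= first_pos c (s1 ++ s2).
Proof. by move=> /negbTE h; rewrite /first_pos index_cat h leq_addr. Qed.

Lemma last_in c (s1 s2 : seq nat) : c \in s1 -> c \notin s2 -> last_pos c (s1 ++ s2) < size s1.
Proof.
move=> h1 /negbTE h2; rewrite /last_pos rev_cat index_cat mem_rev h2 size_cat size_rev.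
have H3 : index c (rev s1) < size s1 by rewrite -size_rev index_mem mem_rev.
have H4 : 0 < size s1 by case: s1 h1 H3.
move: H3 H4; move: (index c (rev s1)) (size s1) (size s2) => i n1 n2; lia.
Qed.

Lemma last_out c (s1 s2 : seq nat) : c \in s2 -> size s1 <= last_pos c (s1 ++ s2).
Proof.
move=> h2; rewrite /last_pos rev_cat index_cat mem_rev h2 size_cat.
have H3 : index c (rev s2) < size s2 by rewrite -size_rev index_mem mem_rev.
move: H3; move: (index c (rev s2)) (size s1) (size s2) => i n1 n2; lia.
Qed.

Lemma cover_step (s1 s2 : seq nat) a : packed (s1 ++ s2) -> disj s1 s2 ->
  a \in s1 -> a.+1 \in s2 -> pw_cover (s1 ++ s2) (swap_letters a (s1 ++ s2)).
Proof.
move=> pz dz h1 h2.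
have a0 : 0 < a by apply: (packed_pos pz); rewrite mem_cat h1.
have am : a < maxw (s1 ++ s2) by apply: maxw_ub; rewrite mem_cat h2 orbT.
have E := swap_mem_packed pz a0 am.
split => //; first exact: packed_mem pz (fun z => esym (E z)).
exists a; split; first by rewrite swapK.
have := iInv_swap pz a0 am.
have -> : gg (s1 ++ s2) a a.+1 = 0.
  rewrite /gg; have := first_in s2 h1; have := last_out s1 h2.
  case: ltnP => //; lia.
have -> : gg (s1 ++ s2) a.+1 a = 1.
  rewrite /gg; have := last_in h1 (disjP dz h1).
  have h3 : a.+1 \notin s1.
    by apply/negP => h; have := disjP dz h; rewrite h2.
  have := first_out s2 h3.
  case: ltnP => //; lia.
lia.
Qed.

Lemma sig_le a c d : ~~ ((c == a) && (d == a.+1)) -> ~~ ((c == a.+1) && (d == a)) ->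
  (sig a c <= sig a d) = (c <= d).
Proof. by rewrite /sig; repeat case: eqP; lia. Qed.

Lemma iso_swap a s : (a \notin s) || (a.+1 \notin s) -> iso s (swap_letters a s).
Proof.
move=> h; split; first by rewrite swapE size_map.
move=> i j hi hj; rewrite swapE !(nth_map 0) //.
have mi := mem_nth 0 hi; have mj := mem_nth 0 hj.
rewrite sig_le //; apply/negP => /andP [/eqP e1 /eqP e2]; move: h;
  by rewrite e1 in mi; rewrite e2 in mj; rewrite mi mj.
Qed.

Lemma sumn_le (f : nat -> nat) s : {in s, forall z, f z <= z} ->
  sumn (map f s) <= sumn s.
Proof.
elim: s => //= x s IH H.
have hx := H x (mem_head _ _).
have : sumn (map f s) <= sumn s.
  by apply: IH => z hz; apply: H; rewrite in_cons hz orbT.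
lia.
Qed.

Lemma sumn_decr (f : nat -> nat) s : {in s, forall z, f z <= z} ->
  has (fun z => f z < z) s -> sumn (map f s) < sumn s.
Proof.
elim: s => //= x s IH H /orP [h|h].
- have : sumn (map f s) <= sumn s.
    by apply: sumn_le => z hz; apply: H; rewrite in_cons hz orbT.
  lia.
- have hx := H x (mem_head _ _).
  have : sumn (map f s) < sumn s.
    by apply: IH => // z hz; apply: H; rewrite in_cons hz orbT.
  lia.
Qed.

Lemma lowhigh (L H : seq nat) : packed (L ++ H) -> disj L H ->
  (forall c, c \in H -> c.+1 \notin L) -> forall y z, y \in L -> z \in H -> y < z.
Proof.
move=> /packed_iff pz dz nc.
have claim : forall d z, z \in H -> z + d \notin L.
  elim=> [|d IH] z zH.
    by rewrite addn0; apply/negP => zL; have := disjP dz zL; rewrite zH.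
  apply/negP => hL.
  have h1 : z + d.+1 \in L ++ H by rewrite mem_cat hL.
  have zp : 0 < z by move: (pz z); rewrite mem_cat zH orbT => /esym /andP [].
  have h2 : z + d \in L ++ H.
    move: h1; rewrite !pz => /andP [_ h]; apply/andP; split; lia.
  move: h2; rewrite mem_cat => /orP [h|h].
    by have := IH z zH; rewrite h.
  by have := nc _ h; rewrite -addnS hL.
move=> y z yL zH; rewrite ltnNge; apply/negP => h.
by have := claim (y - z) z zH; rewrite subnKC // yL.
Qed.

Lemma count_undup_cat (P : pred nat) L H : disj L H ->
  count P (undup (L ++ H)) = count P (undup L) + count P (undup H).
Proof.
move=> dz; rewrite undup_cat count_cat; congr addn.
rewrite (@eq_in_filter _ _ predT) ?filter_predT // => x; rewrite mem_undup => xL.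
by rewrite (disjP dz xL).
Qed.

Lemma base_pack L H : packed (L ++ H) -> disj L H ->
  (forall y z, y \in L -> z \in H -> y < z) ->
  pack L = L /\ H = map (fun x => x + maxw L) (pack H).
Proof.
move=> pz dz lt.
set s := size (undup L).
have cL : forall c, c \in L -> count (fun y => y <= c) (undup L) = c.
  move=> c cL.
  have cLH : c \in L ++ H by rewrite mem_cat cL.
  have := count_undup_packed pz cLH; rewrite count_undup_cat //.
  have -> : count (fun y => y <= c) (undup H) = 0.
    rewrite (@eq_in_count _ _ pred0) ?count_pred0 // => z.
    by rewrite mem_undup => zH /=; rewrite leqNgt (lt c z cL zH).
  by rewrite addn0.
have cH : forall z, z \in H -> count (fun y => y <= z) (undup H) + s = z.
  move=> z zH.
  have zLH : z \in L ++ H by rewrite mem_cat zH orbT.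
  have := count_undup_packed pz zLH; rewrite count_undup_cat //.
  have -> : count (fun y => y <= z) (undup L) = s.
    rewrite (@eq_in_count _ _ predT) ?count_predT // => y.
    by rewrite mem_undup => yL /=; rewrite ltnW // (lt y z yL zH).
  by rewrite addnC.
have mL : maxw L = s.
  have [EL|NL] := eqVneq L [::]; first by rewrite /s EL.
  have ML := maxw_mem NL.
  rewrite -[LHS](cL _ ML) (@eq_in_count _ _ predT) ?count_predT // => y.
  by rewrite mem_undup => yL /=; apply: maxw_ub.
split.
- rewrite /pack; transitivity (map id L); last exact: map_id.
  by apply/eq_in_map => c hc; apply: cL.
- rewrite /pack -map_comp mL; transitivity (map id H); first by rewrite map_id.
  by apply/eq_in_map => z hz /=; rewrite cH.
Qed.

Lemma disj_sym L H : disj L H -> disj H L.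
Proof.
move=> d; apply/hasPn => x xH; apply/negP => xL.
by have := disjP d xL; rewrite xH.
Qed.

Lemma packed_catC L H : packed (L ++ H) -> packed (H ++ L).
Proof. move=> p; apply: (packed_mem p) => z; by rewrite !mem_cat orbC. Qed.

Lemma sig_a a : sig a a = a.+1.
Proof. by rewrite /sig eqxx. Qed.

Lemma sig_a1 a : sig a a.+1 = a.
Proof. by rewrite /sig; case: eqP => [h|_]; [lia | rewrite eqxx]. Qed.

Lemma swap_common (L H : seq nat) a : packed (L ++ H) -> disj L H ->
  a \in L ++ H -> a.+1 \in L ++ H ->
  [/\ packed (swap_letters a L ++ swap_letters a H),
      disj (swap_letters a L) (swap_letters a H) &
      swap_letters a (L ++ H) = swap_letters a L ++ swap_letters a H].
Proof.
move=> px dx h1 h2.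
have a0 : 0 < a by apply: (packed_pos px).
have am : a < maxw (L ++ H) by apply: maxw_ub.
have hx : swap_letters a (L ++ H) = swap_letters a L ++ swap_letters a H.
  by rewrite !swapE map_cat.
split => //.
- rewrite -hx; apply: (packed_mem px) => z; by rewrite swap_mem_packed.
- apply/hasPn => z; rewrite !mem_swap => h; exact: disjP dx h.
Qed.

Lemma down_step (L H : seq nat) a : packed (L ++ H) -> disj L H ->
  a \in H -> a.+1 \in L ->
  exists L' H', [/\ packed (L' ++ H'), disj L' H', (pack L', pack H') = (pack L, pack H),
     sumn L' < sumn L & pw_cover (L' ++ H') (L ++ H)].
Proof.
move=> px dx aH a1L.
have aLH : a \in L ++ H by rewrite mem_cat aH orbT.
have a1LH : a.+1 \in L ++ H by rewrite mem_cat a1L.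
have [p' d' hx] := swap_common px dx aLH a1LH.
have aL : a \notin L by apply/negP => h; have := disjP dx h; rewrite aH.
have a1H : a.+1 \notin H by apply: disjP dx a1L.
exists (swap_letters a L), (swap_letters a H); split => //.
- rewrite -(pack_iso (iso_swap (_ : (a \notin L) || _))) ?aL //.
  by rewrite -(pack_iso (iso_swap (_ : _ || (a.+1 \notin H)))) // a1H orbT.
- rewrite swapE; apply: sumn_decr.
    move=> z zL; rewrite /sig; case: eqP => [e|_]; first by move: aL; rewrite -e zL.
    by case: eqP => [->|_] //; apply: leqnSn.
  by apply/hasP; exists a.+1 => //; rewrite sig_a1.
- have := cover_step p' d' (_ : a \in swap_letters a L) (_ : a.+1 \in swap_letters a H).
  rewrite -hx swapK; apply.
  + by rewrite mem_swap sig_a.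
  + by rewrite mem_swap sig_a1.
Qed.

Lemma up_step (L H : seq nat) a : packed (L ++ H) -> disj L H ->
  a \in L -> a.+1 \in H ->
  exists L' H', [/\ packed (L' ++ H'), disj L' H', (pack L', pack H') = (pack L, pack H),
     sumn H' < sumn H & pw_cover (L ++ H) (L' ++ H')].
Proof.
move=> px dx aL a1H.
have aLH : a \in L ++ H by rewrite mem_cat aL.
have a1LH : a.+1 \in L ++ H by rewrite mem_cat a1H orbT.
have [p' d' hx] := swap_common px dx aLH a1LH.
have aH : a \notin H by apply: disjP dx aL.
have a1L : a.+1 \notin L by apply/negP => h; have := disjP dx h; rewrite a1H.
exists (swap_letters a L), (swap_letters a H); split => //.
- rewrite -(pack_iso (iso_swap (_ : _ || (a.+1 \notin L)))) ?a1L ?orbT //.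
  by rewrite -(pack_iso (iso_swap (_ : (a \notin H) || _))) // aH.
- rewrite swapE; apply: sumn_decr.
    move=> z zH; rewrite /sig; case: eqP => [e|_]; first by move: aH; rewrite -e zH.
    by case: eqP => [->|_] //; apply: leqnSn.
  by apply/hasP; exists a.+1 => //; rewrite sig_a1.
- rewrite -hx; exact: cover_step px dx aL a1H.
Qed.

Lemma down_base (L H : seq nat) : packed (L ++ H) -> disj L H ->
  ~~ has (fun a => a.+1 \in L) H -> gsp_under (pack L) (pack H) = L ++ H.
Proof.
move=> px dx /hasPn no.
have [pL eH] := base_pack px dx (lowhigh px dx no).
by rewrite /gsp_under pL -eH.
Qed.

Lemma up_base (L H : seq nat) : packed (L ++ H) -> disj L H ->
  ~~ has (fun a => a.+1 \in H) L -> gsp_over (pack L) (pack H) = L ++ H.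
Proof.
move=> px dx /hasPn no.
have px' := packed_catC px; have dx' := disj_sym dx.
have [pH eL] := base_pack px' dx' (lowhigh px' dx' no).
by rewrite /gsp_over pH -eL.
Qed.

Lemma down_all n : forall L H : seq nat, sumn L <= n -> packed (L ++ H) -> disj L H ->
  pw_le (gsp_under (pack L) (pack H)) (L ++ H).
Proof.
elim: n => [|n IH] L H hs px dx;
  (case: (boolP (has (fun a => a.+1 \in L) H)) => [/hasP [a aH a1L] | no];
   last by rewrite down_base //; apply: rt_refl);
  have [L' [H' [p' d' [e1 e2] hlt cov]]] := down_step px dx aH a1L.
- lia.
- have hn : sumn L' <= n by lia.
  have := IH L' H' hn p' d'; rewrite e1 e2 => h.
  exact: rt_trans h (rt_step _ _ _ _ cov).
Qed.

Lemma up_all n : forall L H : seq nat, sumn H <= n -> packed (L ++ H) -> disj L H ->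
  pw_le (L ++ H) (gsp_over (pack L) (pack H)).
Proof.
elim: n => [|n IH] L H hs px dx;
  (case: (boolP (has (fun a => a.+1 \in H) L)) => [/hasP [a aL a1H] | no];
   last by rewrite up_base //; apply: rt_refl);
  have [L' [H' [p' d' [e1 e2] hlt cov]]] := up_step px dx aL a1H.
- lia.
- have hn : sumn H' <= n by lia.
  have := IH L' H' hn p' d'; rewrite e1 e2 => h.
  exact: rt_trans (rt_step _ _ _ _ cov) h.
Qed.

Definition ptree_ind2 (P : ptree -> Prop) (hL : P Leaf)
  (hN : forall x cs, (forall c, List.In c cs -> P c) -> P (Node x cs)) :
  forall t, P t :=
  fix IH t := match t with
  | Leaf => hL
  | Node x cs => hN x cs
      ((fix F (l : seq ptree) : forall c, List.In c l -> P c :=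
          match l with
          | [::] => fun c (h : List.In c [::]) => False_ind _ h
          | c0 :: l' => fun c h =>
              match h with
              | or_introl e => eq_ind c0 P (IH c0) c e
              | or_intror h' => F l' c h'
              end
          end) cs)
  end.

Lemma mem_flat_map (f : ptree -> seq nat) cs z :
  (z \in flatten (map f cs)) = has (fun c => z \in f c) cs.
Proof. by elim: cs => //= c cs IH; rewrite mem_cat IH. Qed.

Lemma all_In (p : pred ptree) cs c : all p cs -> List.In c cs -> p c.
Proof. by elim: cs => //= c0 cs IH /andP [h1 h2] [<-|/IH]; auto. Qed.

Lemma tree_mem t : tree_wf t -> forall z, (z \in tree_word t) = (z \in tree_labels t).
Proof.
elim/ptree_ind2: t => [//|x cs IH] /= /and3P [hs _ hw] z.
have IH' : forall c, List.In c cs -> (z \in tree_word c) = (z \in tree_labels c).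
  by move=> c hc; apply: IH => //; apply: (all_In hw).
case: cs hs IH' {IH hw} => [//|c cs'] hs IH'.
case: cs' hs IH' => [//|c1 cs''] _ IH'.
rewrite mem_cat (mem_flat_map (fun c' => x :: tree_word c')) in_cons (mem_flat_map tree_labels) /= in_cons.
rewrite (IH' c (or_introl erefl)) (IH' c1 (or_intror (or_introl erefl))).
have -> : has (fun c' : ptree => z \in (x :: tree_word c')) cs'' =
          ((0 < size cs'') && (z == x)) || has (fun c' : ptree => z \in tree_labels c') cs''.
  have H'' : forall c, List.In c cs'' -> (z \in tree_word c) = (z \in tree_labels c).
    by move=> d hd; apply: IH'; right; right.
  elim: cs'' H'' {IH'} => //= d ds IHd Hd.
  rewrite in_cons (Hd d (or_introl erefl)) IHd; last by move=> e he; apply: Hd; right.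
  by case: (z == x); case: ds {IHd Hd} => //=; rewrite ?orbT.
by case: (z == x); case: (z \in tree_labels c); case: (z \in tree_labels c1);
   case: (0 < size cs''); rewrite //= ?orbT ?andbF.
Qed.

Lemma gsp_packed w : isGSP w -> packed w.
Proof.
case=> t /and3P [wf lab /eqP <-].
apply: (@packed_range _ (size (tree_labels t))) => z.
by rewrite tree_mem // (perm_mem lab) mem_iota; lia.
Qed.

Unset Implicit Arguments.

Theorem mainTheorem10 :
  forall u v : seq nat, isGSP u -> isGSP v ->
  forall w : seq nat, isGSP w ->
    ((pw_le (gsp_under u v) w /\ pw_le w (gsp_over u v)) ->
       dual_prod (Fdual u) (Fdual v) w = 1) /\
    (~ (pw_le (gsp_under u v) w /\ pw_le w (gsp_over u v)) ->
       dual_prod (Fdual u) (Fdual v) w = 0).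
Proof.
move=> u v gu gv w gw.
have pu := gsp_packed gu; have pv := gsp_packed gv; have pw := gsp_packed gw.
rewrite dual_prodE; split.
- by move=> [h1 h2]; rewrite (interval_shuffle pu pv h1 h2).
- move=> nint; case: and4P => [[h1 h2 /eqP h3 /eqP h4]|] //=.
  exfalso; apply: nint.
  have px : packed (take (size u) w ++ drop (size u) w) by rewrite cat_take_drop.
  have dx : disj (take (size u) w) (drop (size u) w) by [].
  split.
  + have := down_all (leqnn _) px dx; by rewrite h3 h4 cat_take_drop.
  + have := up_all (leqnn _) px dx; by rewrite h3 h4 cat_take_drop.
Qed.
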